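(* Let $\mathcal C$ be an epireflective subcategory of $\mathbf{Top}$, $X$ a topological space and $A$ a subspace of $X$. Then the epireflection preserves the subspace $A\hookrightarrow X$ if and only if both of the following hold: (1) for all $a_1,a_2\in A$ with $\mathrm{r}_{(A,\mathcal C)}(a_1)\neq\mathrm{r}_{(A,\mathcal C)}(a_2)$ we have $\mathrm{r}_{(X,\mathcal C)}(a_1)\neq\mathrm{r}_{(X,\mathcal C)}(a_2)$; (2) for every $\mathcal C$-closed (resp. $\mathcal C$-open) subset $F$ of $A$ there is a $\mathcal C$-closed (resp. $\mathcal C$-open) subset $E$ of $X$ with $E\cap A=F$.
   Context: An epireflective subcategory $\mathcal C$ of $\mathbf{Top}$ is a full, isomorphism-closed subcategory closed under products and subspaces; each space $X$ has a reflection $\mathrm{r}_{\mathcal C}X\in\mathcal C$ with a continuous surjection $\mathrm{r}_{(X,\mathcal C)}\colon X\to\mathrm{r}_{\mathcal C}X$ through which every continuous map from $X$ into a space of $\mathcal C$ factors uniquely; $\mathrm{r}_{\mathcal C}(f)$ is the induced map. The epireflection preserves the subspace $A\hookrightarrow X$ (inclusion $i$) if $\mathrm{r}_{\mathcal C}(i)\colon\mathrm{r}_{\mathcal C}A\to\mathrm{r}_{\mathcal C}X$ is a homeomorphism onto a subspace of $\mathrm{r}_{\mathcal C}X$. For a space $Z$, a subset is $\mathcal C$-open if it belongs to the topology on $Z$ generated by the sets $f^{-1}(U)$ with $f\colon Z\to Y$ continuous, $Y\in\mathcal C$, $U$ open in $Y$; it is $\mathcal C$-closed if its complement is $\mathcal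 C$-open. *)

(* Defs.v *)
From HB Require Import structures.
From mathcomp Require Import all_boot all_algebra all_classical topology.
Set Implicit Arguments. Unset Strict Implicit. Unset Printing Implicit Defensive.
Local Open Scope classical_set_scope.

(* A class of topological spaces (a full subcategory of Top). *)
Definition top_class := topologicalType -> Prop.

Definition homeomorphism (S T : topologicalType) (f : S -> T) : Prop :=
  continuous f /\ exists g : T -> S, continuous g /\ cancel f g /\ cancel g f.

Definition embedding (S T : topologicalType) (f : S -> T) : Prop :=
  exists h : S -> set_type (range f),
    (forall s, set_val (h s) = f s) /\ homeomorphism h.

Definition is_reflection (C : top_class) (X R : topologicalType) (r : X -> R) : Prop :=
  [/\ C R, continuous r, (forall y : R, exists x : X, r x = y) &
      forall (Y : topologicalType) (f : X -> Y), C Y -> continuous f ->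
        (exists g : R -> Y, continuous g /\ f = g \o r) /\
        (forall g1 g2 : R -> Y, continuous g1 -> continuous g2 ->
            g1 \o r = g2 \o r -> g1 = g2)].

Definition epireflective (C : top_class) : Prop :=
  [/\ (forall (S T : topologicalType) (f : S -> T), homeomorphism f -> C S -> C T),
      (forall (I : Type) (T : I -> topologicalType),
          (forall i, C (T i)) -> C (prod_topology T)),
      (forall (T : topologicalType) (A : set T), C T -> C (set_type A)) &
      (forall X : topologicalType, exists (R : topologicalType) (r : X -> R),
          is_reflection C r)].

Definition is_topology_on (Z : Type) (tau : set (set Z)) : Prop :=
  [/\ tau setT,
      (forall U V, tau U -> tau V -> tau (U `&` V)) &
      (forall G : set (set Z), G `<=` tau -> tau (\bigcup_(U in G) U))].

(* C-open: belongs to the topology generated by the preimages f^-1(U) with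
   f : Z -> Y continuous, Y in C, U open in Y. *)
Definition C_open (C : top_class) (Z : topologicalType) (S : set Z) : Prop :=
  forall tau : set (set Z), is_topology_on tau ->
    (forall (Y : topologicalType) (f : Z -> Y) (U : set Y),
        C Y -> continuous f -> open U -> tau (f @^-1` U)) ->
    tau S.

Definition C_closed (C : top_class) (Z : topologicalType) (S : set Z) : Prop :=
  C_open C (~` S).

(* Main.v *)
Require Import Defs.
From HB Require Import structures.
From mathcomp Require Import all_boot all_algebra all_classical topology.
Local Open Scope classical_set_scope.

Lemma Copen_iff (C : top_class) (Z R : topologicalType) (r : Z -> R)
  (Hr : is_reflection C r) (S : set Z) :
  C_open C S <-> exists V : set R, open V /\ S = r @^-1` V.
Proof.
case: Hr => CR rc rsurj rfact; split.
- move=> HS; apply: (HS (fun S => exists V : set R, open V /\ S = r @^-1` V)).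
  + split.
    * by exists setT; split; [exact: openT | rewrite preimage_setT].
    * move=> U V [U' [oU ->]] [V' [oV ->]]; exists (U' `&` V'); split.
        exact: openI.
      by rewrite preimage_setI.
    * move=> G HG.
      exists (\bigcup_(V in [set V | open V /\ G (r @^-1` V)]) V); split.
        by apply: bigcup_open => i [].
      rewrite predeqE => x; split.
        move=> [U GU Ux]; have [V [oV EU]] := HG U GU.
        exists V; first by split => //; rewrite -EU.
        by move: Ux; rewrite EU.
      by move=> [V [oV GV] Vx]; exists (r @^-1` V).
  + move=> Y f U CY fc oU.
    have [[g [gc fE]] _] := rfact Y f CY fc.
    exists (g @^-1` U); split; first exact: (proj1 (continuousP g) gc).
    by rewrite fE.
- move=> [V [oV ->]] tau _ Htau; exact: Htau.
Qed.

Lemma closed_open_cond (C : top_class) (X : topologicalType) (A : set X) :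
  (forall F : set (set_type A), C_closed C F ->
        exists E : set X, C_closed C E /\ (@set_val X A) @^-1` E = F) <->
  (forall F : set (set_type A), C_open C F ->
        exists E : set X, C_open C E /\ (@set_val X A) @^-1` E = F).
Proof.
split.
- move=> H F HF.
  have [E [HE EF]] : exists E : set X, C_closed C E /\ set_val @^-1` E = ~` F.
    by apply: H; rewrite /C_closed setCK.
  exists (~` E); split => //; by rewrite -[F]setCK -EF.
- move=> H F HF.
  have [E [HE EF]] := H _ HF.
  exists (~` E); split; first by rewrite /C_closed setCK.
  by rewrite -[F]setCK -EF.
Qed.

Theorem proposition5p4 (C : top_class) (HC : epireflective C)
  (X : topologicalType) (A : set X)
  (RA : topologicalType) (rA : set_type A -> RA) (HrA : is_reflection C rA)
  (RX : topologicalType) (rX : X -> RX) (HrX : is_reflection C rX)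
  (ri : RA -> RX) (Hri_cont : continuous ri)
  (Hri : ri \o rA = rX \o (@set_val X A)) :
  (embedding ri <->
     (forall a1 a2 : set_type A, rA a1 <> rA a2 -> rX (set_val a1) <> rX (set_val a2)) /\
     (forall F : set (set_type A), C_closed C F ->
        exists E : set X, C_closed C E /\ (@set_val X A) @^-1` E = F)) /\
  (embedding ri <->
     (forall a1 a2 : set_type A, rA a1 <> rA a2 -> rX (set_val a1) <> rX (set_val a2)) /\
     (forall F : set (set_type A), C_open C F ->
        exists E : set X, C_open C E /\ (@set_val X A) @^-1` E = F)).
Proof.
have HriE : forall a, ri (rA a) = rX (set_val a).
  by move=> a; exact: (congr1 (fun f => f a) Hri).
have rAsurj : forall y, exists a, rA a = y by case: HrA.
suff Hopen : (embedding ri <->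
     (forall a1 a2 : set_type A, rA a1 <> rA a2 -> rX (set_val a1) <> rX (set_val a2)) /\
     (forall F : set (set_type A), C_open C F ->
        exists E : set X, C_open C E /\ (@set_val X A) @^-1` E = F)).
  split => //; rewrite closed_open_cond; exact: Hopen.
split.
- move=> [h [hE [hc [g [gc [hK gK]]]]]].
  have riinj : forall s1 s2, ri s1 = ri s2 -> s1 = s2.
    move=> s1 s2; rewrite -!hE => /val_inj Eh.
    by rewrite -(hK s1) Eh hK.
  split.
    move=> a1 a2 Hne E; apply: Hne; apply: riinj; by rewrite !HriE.
  move=> F /(@Copen_iff _ _ _ _ HrA) [V [oV ->]].
  have := proj1 (continuousP g) gc V oV => -[W oW WE].
  exists (rX @^-1` W); split.
    by apply/(@Copen_iff _ _ _ _ HrX); exists W.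
  rewrite predeqE => a /=; rewrite -HriE -hE.
  have -> : V (rA a) = (g @^-1` V) (h (rA a)) by rewrite /= hK.
  by rewrite -WE.
- move=> [H1 H2].
  have riinj : forall s1 s2, ri s1 = ri s2 -> s1 = s2.
    move=> s1 s2 E.
    have [a1 Ea1] := rAsurj s1; have [a2 Ea2] := rAsurj s2; rewrite -Ea1 -Ea2 in E *.
    apply: contrapT => Hne; apply: (H1 a1 a2 Hne).
    by rewrite -!HriE.
  have hmem : forall s, ri s \in range ri by move=> s; apply: mem_set; exists s.
  pose h (s : RA) : set_type (range ri) := exist _ (ri s) (hmem s).
  have hE : forall s, set_val (h s) = ri s by move=> s; rewrite set_valE.
  have gex : forall y : set_type (range ri), exists s, ri s = set_val y.
    move=> y; have := set_valP y; rewrite set_valE /= => -[s _ <-].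
    by exists s.
  pose g (y : set_type (range ri)) : RA := proj1_sig (cid (gex y)).
  have gE : forall y, ri (g y) = set_val y by move=> y; exact: (proj2_sig (cid (gex y))).
  exists h; split => //; split.
    apply/continuousP => U [W oW <-].
    have -> : h @^-1` (set_val @^-1` W) = ri @^-1` W.
      by rewrite predeqE => s /=; rewrite hE.
    exact: (proj1 (continuousP ri) Hri_cont).
  exists g; split; last split.
  + apply/continuousP => V oV.
    have [E [HE EF]] := H2 (rA @^-1` V) (proj2 (@Copen_iff _ _ _ _ HrA _) (ex_intro _ V (conj oV erefl))).
    have [W [oW EE]] := proj1 (@Copen_iff _ _ _ _ HrX _) HE.
    exists W => //.
    rewrite predeqE => y /=.
    have [a Ea] := rAsurj (g y).
    have : set_val y = rX (set_val a) by rewrite -gE -Ea HriE.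
    move=> ->; rewrite -Ea.
    have -> : W (rX (set_val a)) = E (set_val a) by rewrite EE.
    have -> : V (rA a) = (rA @^-1` V) a by [].
    by rewrite -EF.
  + move=> s; apply: riinj; rewrite gE; exact: hE.
  + move=> y; apply: val_inj.
    have := hE (g y); rewrite gE !set_valE => ->; done.
Qed.
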